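(* Let $(Q,\mathcal Q)$ and $(\Delta,\mathcal D)$ be measurable spaces and $f:Q\to Q$, $g:Q\to\Delta$ measurable maps. Consider the generator $[(Q,\mathcal Q),T,(\Delta,\mathcal D)]$ defined by $T(x,\cdot):=\delta_{(f(x),\,g(f(x)))}$, i.e. $T(x,A\times B)=1$ if $f(x)\in A$ and $g(f(x))\in B$, and $0$ otherwise. Then $$\sigma_Q(T)=\sigma(g\circ f,\,g\circ f^2,\,g\circ f^3,\dots),$$ the $\sigma$-algebra on $Q$ generated by the maps $g\circ f^k$, $k\ge1$.
   Context: A generator $[(Q,\mathcal Q),T,(\Delta,\mathcal D)]$ consists of measurable spaces $(Q,\mathcal Q)$ and $(\Delta,\mathcal D)$ and a Markov transition kernel $T$ from $(Q,\mathcal Q)$ to $(Q\times\Delta,\mathcal Q\otimes\mathcal D)$. For such a generator, $\sigma_Q(T)$ denotes the smallest $\sigma$-subalgebra $\mathcal A$ of $\mathcal Q$ such that for every $C\in\mathcal A\otimes\mathcal D$ the function $x\mapsto T(x,C)$ is $\mathcal A$-measurable (equivalently, the intersection of all $\sigma$-subalgebras of $\mathcal Q$ with this property). *)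

(* Defs.v *)
From HB Require Import structures.
From mathcomp Require Import all_boot all_order all_algebra.
From mathcomp Require Import all_classical all_reals all_analysis.
From mathcomp Require Import measurable_realfun.
Set Implicit Arguments. Unset Strict Implicit. Unset Printing Implicit Defensive.
Import Order.TTheory GRing.Theory Num.Theory.
Local Open Scope classical_set_scope.
Local Open Scope ring_scope.

Definition measurable_wrt (Q : Type) (R : realType) (A : set (set Q))
  (h : Q -> \bar R) : Prop :=
  forall B : set (\bar R), measurable B -> A (h @^-1` B).

Definition prod_sigma (Q : Type) (dD : measure_display) (Dl : measurableType dD)
  (A : set (set Q)) : set (set (Q * Dl)) :=
  <<s [set C | exists X Y, A X /\ measurable Y /\ C = X `*` Y] >>.

Definition sigmaQ_admissible (dQ dD : measure_display) (Q : measurableType dQ)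
  (Dl : measurableType dD) (R : realType) (T : Q -> set (Q * Dl) -> \bar R)
  (A : set (set Q)) : Prop :=
  [/\ sigma_algebra setT A, A `<=` measurable &
      forall C, @prod_sigma Q dD Dl A C -> measurable_wrt A (fun x => T x C)].

Definition sigmaQ (dQ dD : measure_display) (Q : measurableType dQ)
  (Dl : measurableType dD) (R : realType) (T : Q -> set (Q * Dl) -> \bar R)
  : set (set Q) :=
  [set B | forall A, sigmaQ_admissible T A -> A B].

Definition dirac_gen (dQ dD : measure_display) (Q : measurableType dQ)
  (Dl : measurableType dD) (R : realType) (f : Q -> Q) (g : Q -> Dl)
  : Q -> set (Q * Dl) -> \bar R :=
  fun x C => @dirac _ _ (f x, g (f x)) R C.

Definition sigma_iter (dQ dD : measure_display) (Q : measurableType dQ)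
  (Dl : measurableType dD) (f : Q -> Q) (g : Q -> Dl) : set (set Q) :=
  <<s [set S | exists k : nat, exists B : set Dl,
         (0 < k)%N /\ measurable B /\ S = (g \o iter k f) @^-1` B] >>.

(* Main.v *)
Require Import Defs.
From HB Require Import structures.
From mathcomp Require Import all_boot all_order all_algebra.
From mathcomp Require Import all_classical all_reals all_analysis.
From mathcomp Require Import measurable_realfun.
Local Open Scope classical_set_scope.
Local Open Scope ring_scope.
Import GRing.Theory Num.Theory.

Section Helpers.

Lemma sa_setT (U : Type) (S : set (set U)) : sigma_algebra setT S -> S setT.
Proof. by case=> S0 SC _; rewrite -(setD0 setT); apply: SC. Qed.

Lemma sa_setC (U : Type) (S : set (set U)) X :
  sigma_algebra setT S -> S X -> S (~` X).
Proof. by case=> _ SC _ SX; rewrite -setTD; apply: SC. Qed.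

Lemma sa_setU (U : Type) (S : set (set U)) X Y :
  sigma_algebra setT S -> S X -> S Y -> S (X `|` Y).
Proof.
move=> hS SX SY; rewrite -bigcup2E; case: hS => S0 _ SU; apply: SU => n.
by rewrite /bigcup2; case: ifP => // _; case: ifP.
Qed.

Lemma sa_setI (U : Type) (S : set (set U)) X Y :
  sigma_algebra setT S -> S X -> S Y -> S (X `&` Y).
Proof.
move=> hS SX SY; rewrite -[X `&` Y]setCK setCI.
by apply: sa_setC => //; apply: sa_setU => //; apply: sa_setC.
Qed.

Lemma sa_preimage (U V : Type) (phi : U -> V) (S : set (set U)) :
  sigma_algebra setT S -> sigma_algebra setT [set X | S (phi @^-1` X)].
Proof.
move=> hS; case: (hS) => S0 SC SU; split => /=.
- by rewrite preimage_set0.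
- by move=> X SX; rewrite setTD -preimage_setC; apply: sa_setC.
- by move=> F SF; rewrite preimage_bigcup; apply: SU.
Qed.

End Helpers.
Arguments sa_setT {U S}. Arguments sa_setC {U S X}. Arguments sa_setU {U S X Y}.
Arguments sa_setI {U S X Y}. Arguments sa_preimage {U V} phi {S}.

Theorem theorem4p2 (dQ dD : measure_display) (Q : measurableType dQ)
  (Dl : measurableType dD) (R : realType) (f : Q -> Q) (g : Q -> Dl)
  (mf : measurable_fun setT f) (mg : measurable_fun setT g) :
  sigmaQ (dirac_gen R f g) = sigma_iter f g.
Proof.
set h : Q -> Q * Dl := fun x => (f x, g (f x)).
have TE : forall x C, dirac_gen R f g x C = ((h x \in C)%:R)%:E.
  by move=> x C; rewrite /dirac_gen diracE.
have hSS : sigma_algebra setT (sigma_iter f g) by exact: smallest_sigma_algebra.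
apply/seteqP; split.
- move=> B HB; apply: HB; split => //.
  + apply: smallest_sub; first exact: sigma_algebra_measurable.
    move=> _ [k [Y [k0 [mY ->]]]].
    have mi : forall n, measurable_fun setT (iter n f).
      elim=> [|n IH] /=; first exact: measurable_id.
      exact: measurableT_comp.
    rewrite -[_ @^-1` _]setTI; apply: (measurableT_comp mg (mi k)) => //.
  +
    have fS : forall X, sigma_iter f g X -> sigma_iter f g (f @^-1` X).
      move=> X0 HX0; eapply (smallest_sub (sa_preimage f hSS)); [|exact: HX0].
      move=> _ [k [Y [k0 [mY ->]]]] /=.
      apply: sub_sigma_algebra; exists k.+1, Y; do 2?split => //.
      by apply: funext => x /=; rewrite -iterSr.
    have hS : forall C, prod_sigma (sigma_iter f g) C ->
        sigma_iter f g (h @^-1` C).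
      move=> C0 HC0; eapply (smallest_sub (sa_preimage h hSS)); [|exact: HC0].
      move=> _ [X [Y [SX [mY ->]]]] /=.
      have -> : h @^-1` (X `*` Y) = f @^-1` X `&` (g \o f) @^-1` Y by [].
      apply: (sa_setI hSS); first exact: fS.
      apply: sub_sigma_algebra; exists 1%N, Y; split => //.
    move=> C PC Bb mBb.
    have SC := hS C PC.
    have [b1|nb1] := pselect (Bb 1%:E); have [b0|nb0] := pselect (Bb 0%:E).
    * have -> : (fun x => dirac_gen R f g x C) @^-1` Bb = setT.
        apply/seteqP; split => x //= _; rewrite TE.
        by case: (h x \in C).
      exact: (sa_setT hSS).
    * have -> : (fun x => dirac_gen R f g x C) @^-1` Bb = h @^-1` C.
        apply/seteqP; split => x /=; rewrite TE.
          by case: (boolP (h x \in C)) => [/set_mem //|_ /=]; rewrite mulr0n.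
        by move=> hx; rewrite (mem_set hx).
      exact: SC.
    * have -> : (fun x => dirac_gen R f g x C) @^-1` Bb = ~` (h @^-1` C).
        apply/seteqP; split => x /=; rewrite TE.
          case: (boolP (h x \in C)) => [_ //|/negP hx _ hC]; apply: hx.
          exact: mem_set.
        case: (boolP (h x \in C)) => [/set_mem hx /(_ hx) //|_ _].
        by rewrite mulr0n.
      exact: (sa_setC hSS).
    * have -> : (fun x => dirac_gen R f g x C) @^-1` Bb = set0.
        apply/seteqP; split => x //=; rewrite TE.
        by case: (h x \in C) => /=; rewrite ?mulr0n.
      by case: hSS.
- move=> B HB A [hA Am HT].
  have key : forall X Y, A X -> measurable Y -> A (h @^-1` (X `*` Y)).
    move=> X Y AX mY.
    have PC : prod_sigma A (X `*` Y).
      by apply: sub_sigma_algebra; exists X, Y.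
    have := HT _ PC [set 1%:E] (emeasurable_set1 _).
    congr A; apply/seteqP; split => x /=; rewrite TE.
      case: (boolP (h x \in X `*` Y)) => [/set_mem //|_ /=].
      by rewrite mulr0n => -[] /eqP; rewrite eq_sym oner_eq0.
    move=> hx; have hx2 : h x \in X `*` Y by apply: mem_set.
    by rewrite hx2.
  have gen : forall n Y, measurable Y -> A ((g \o iter n.+1 f) @^-1` Y).
    elim=> [|n IH] Y mY.
      have := key setT Y (sa_setT hA) mY.
      congr A; apply/seteqP; split => x //=; by case.
    have := key _ setT (IH Y mY) measurableT.
    congr A; apply: funext => x.
    change ((Y (g (iter n.+1 f (f x))) /\ True) = Y (g (iter n.+2 f x))).
    rewrite (iterSr n.+1).
    by apply/propext; split; [case|move=> ?; split].
  apply: (smallest_sub hA _ HB).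
  move=> _ [[|k] [Y [k0 [mY ->]]]] //.
  exact: gen.
Qed.
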